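(* Define sequences $E=(E_n)_{n\ge1}$ and $Q=(q_n)_{n\ge1}$ by concatenating, for $m=1,2,3,\dots$, the block $(0,2,4,\dots,2m-2)$ of length $m$ for $E$ and the block $(2m,2m,\dots,2m)$ of length $m$ for $Q$; thus $E=(0,\,0,2,\,0,2,4,\,0,2,4,6,\dots)$ and $Q=(2,\,4,4,\,6,6,6,\,8,8,8,8,\dots)$. Let $x=\sum_{n=1}^\infty\frac{E_n}{q_1q_2\cdots q_n}$. Then $x$ is $Q$-distribution normal, but $x/2$ is not $Q$-distribution normal.
   Context: Let $T_{Q,n}(x)=\left(\prod_{j=1}^n q_j\right)x \bmod 1$. A real $x$ is $Q$-distribution normal if $(T_{Q,n}(x))_{n\ge0}$ is uniformly distributed modulo $1$. *)

(* Defs.v *)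
From Stdlib Require Import Reals Lra Lia Arith List.
Import ListNotations.
Open Scope R_scope.

(* pos k = (m, j): the (k+1)-th term (1-indexed n = k+1) lies in block m
   (block m has length m) at 0-based position j within that block. *)
Fixpoint pos (k : nat) : nat * nat :=
  match k with
  | O => (1%nat, 0%nat)
  | S k' => let (m, j) := pos k' in
            if Nat.ltb (S j) m then (m, S j) else (S m, 0%nat)
  end.

(* E_n for n >= 1: block (0,2,...,2m-2); value at n = 0 is unused. *)
Definition Eseq (n : nat) : nat := (2 * snd (pos (n - 1)))%nat.
(* q_n for n >= 1: block (2m,...,2m); value at n = 0 is unused. *)
Definition qseq (n : nat) : nat := (2 * fst (pos (n - 1)))%nat.

Fixpoint Qprod (n : nat) : R :=
  match n with
  | O => 1
  | S k => Qprod k * INR (qseq (S k))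
  end.

Definition TQ (n : nat) (x : R) : R := frac_part (Qprod n * x).

Fixpoint count_in (s : nat -> R) (a b : R) (N : nat) : nat :=
  match N with
  | O => O
  | S k => (count_in s a b k +
            (if Rle_dec a (s k) then if Rlt_dec (s k) b then 1 else 0 else 0))%nat
  end.

Definition unif_distr_mod1 (s : nat -> R) : Prop :=
  forall a b : R, 0 <= a -> a < b -> b <= 1 ->
    Un_cv (fun N => INR (count_in (fun n => frac_part (s n)) a b N) / INR N) (b - a).

Definition Q_distribution_normal (x : R) : Prop :=
  unif_distr_mod1 (fun n => TQ n x).

(* the i-th summand (i >= 0) of x = sum_{n>=1} E_n / (q_1...q_n), n = i+1 *)
Definition xterm (i : nat) : R := INR (Eseq (S i)) / Qprod (S i).

Example pos_check : map pos (seq 0 7) =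
  ((1,0)::(2,0)::(2,1)::(3,0)::(3,1)::(3,2)::(4,0)::nil)%nat.
Proof. reflexivity. Qed.

(* Main.v *)
Require Import Defs.
From Stdlib Require Import Reals Lra Lia FunctionalExtensionality.
Open Scope R_scope.

Lemma pos_inv : forall k m j, Defs.pos k = (m, j) ->
  (1 <= m)%nat /\ (j < m)%nat /\ (2 * k = (m - 1) * m + 2 * j)%nat.
Proof.
  induction k as [|k IH]; intros m j H.
  - simpl in H. inversion H. lia.
  - simpl in H. destruct (Defs.pos k) as [m' j'] eqn:E.
    destruct (IH m' j' eq_refl) as (H1 & H2 & H3).
    destruct (Nat.ltb (S j') m') eqn:L.
    + apply Nat.ltb_lt in L. inversion H; subst. lia.
    + apply Nat.ltb_ge in L. inversion H; subst.
      assert (j' = m' - 1)%nat by lia. subst j'.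
      replace (S m' - 1)%nat with m' by lia.
      destruct m'; [lia|]. replace (S m' - 1)%nat with m' in * by lia. nia.
Qed.

Lemma Eseq_S n : Eseq (S n) = (2 * snd (Defs.pos n))%nat.
Proof. unfold Eseq. now replace (S n - 1)%nat with n by lia. Qed.
Lemma qseq_S n : qseq (S n) = (2 * fst (Defs.pos n))%nat.
Proof. unfold qseq. now replace (S n - 1)%nat with n by lia. Qed.

Lemma q_ge n : (2 <= qseq (S n))%nat.
Proof. rewrite qseq_S. destruct (Defs.pos n) as [m j] eqn:E.
  destruct (pos_inv n m j E). simpl. lia. Qed.

Lemma E_le n : (Eseq (S n) + 2 <= qseq (S n))%nat.
Proof. rewrite qseq_S, Eseq_S. destruct (Defs.pos n) as [m j] eqn:E.
  destruct (pos_inv n m j E). simpl. lia. Qed.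

Lemma Qprod_pos n : 0 < Qprod n.
Proof. induction n; simpl. lra. apply Rmult_lt_0_compat; auto.
  apply lt_0_INR. pose proof (q_ge n). lia. Qed.

Lemma xterm_nonneg i : 0 <= xterm i.
Proof. unfold xterm. unfold Rdiv. apply Rmult_le_pos. apply pos_INR.
  left. apply Rinv_0_lt_compat, Qprod_pos. Qed.

Fixpoint Psum (n : nat) : R := match n with O => 0 | S k => Psum k + xterm k end.

Lemma sum_Psum k : sum_f_R0 xterm k = Psum (S k).
Proof. induction k; simpl. lra. simpl in IHk. rewrite IHk. reflexivity. Qed.

Lemma xterm_le n : xterm n <= / Qprod n - / Qprod (S n).
Proof.
  unfold xterm. simpl Qprod.
  pose proof (Qprod_pos n). pose proof (E_le n). pose proof (q_ge n).
  assert (H3 : INR (Eseq (S n)) + 1 <= INR (qseq (S n))).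
  { replace 1 with (INR 1) by reflexivity. rewrite <- plus_INR. apply le_INR. lia. }
  assert (0 < INR (qseq (S n))) by (apply lt_0_INR; lia).
  replace (/ Qprod n - / (Qprod n * INR (qseq (S n))))
    with ((INR (qseq (S n)) - 1) / (Qprod n * INR (qseq (S n)))) by (field; lra).
  unfold Rdiv. apply Rmult_le_compat_r. left. apply Rinv_0_lt_compat.
  apply Rmult_lt_0_compat; lra. lra.
Qed.

Lemma tele n d : Psum (n + d) - Psum n <= / Qprod n - / Qprod (n + d).
Proof.
  induction d. rewrite Nat.add_0_r. lra.
  rewrite Nat.add_succ_r. simpl Psum. pose proof (xterm_le (n+d)). lra.
Qed.

Lemma Pmono n d : Psum n <= Psum (n + d).
Proof. induction d. rewrite Nat.add_0_r. lra.
  rewrite Nat.add_succ_r. simpl. pose proof (xterm_nonneg (n+d)). lra. Qed.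

Lemma frac_nat (k : nat) r : 0 <= r < 1 -> frac_part (INR k + r) = r.
Proof.
  intros H. unfold frac_part, Int_part.
  assert (E : (Z.of_nat k + 1)%Z = up (INR k + r)).
  { apply tech_up; rewrite plus_IZR, <- INR_IZR_INZ; simpl; lra. }
  rewrite <- E. replace (Z.of_nat k + 1 - 1)%Z with (Z.of_nat k) by lia.
  rewrite <- INR_IZR_INZ. lra.
Qed.

Lemma frac_id r : 0 <= r < 1 -> frac_part r = r.
Proof. intros H. pose proof (frac_nat 0 r H). simpl in H0. rewrite Rplus_0_l in H0. exact H0. Qed.

Lemma lim_le (u : nat -> R) l c K : Un_cv u l -> (forall k, (k >= K)%nat -> u k <= c) -> l <= c.
Proof.
  intros H Hb. destruct (Rle_dec l c) as [|Hn]; auto. exfalso.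
  destruct (H (l - c)) as [N HN]. lra.
  specialize (HN (Nat.max N K) (Nat.le_max_l _ _)). specialize (Hb (Nat.max N K) (Nat.le_max_r _ _)).
  unfold R_dist in HN. apply Rabs_def2 in HN. lra.
Qed.

Lemma lim_ge (u : nat -> R) l c K : Un_cv u l -> (forall k, (k >= K)%nat -> c <= u k) -> c <= l.
Proof.
  intros H Hb. destruct (Rle_dec c l) as [|Hn]; auto. exfalso.
  destruct (H (c - l)) as [N HN]. lra.
  specialize (HN (Nat.max N K) (Nat.le_max_l _ _)). specialize (Hb (Nat.max N K) (Nat.le_max_r _ _)).
  unfold R_dist in HN. apply Rabs_def2 in HN. lra.
Qed.

Section X.
Variable x : R.
Hypothesis Hx : infinite_sum xterm x.

Lemma x_bounds n : Psum n <= x <= Psum n + / Qprod n.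
Proof.
  assert (Hc : Un_cv (fun k => Psum (S k)) x).
  { intros e He. destruct (Hx e He) as [N HN]. exists N. intros k Hk.
    rewrite <- sum_Psum. auto. }
  split.
  - apply (lim_ge _ _ _ n Hc). intros k Hk. replace (S k) with (n + (S k - n))%nat by lia.
    apply Pmono.
  - apply (lim_le _ _ _ n Hc). intros k Hk. replace (S k) with (n + (S k - n))%nat by lia.
    pose proof (tele n (S k - n)). pose proof (Qprod_pos (n + (S k - n))).
    pose proof (Rinv_0_lt_compat _ H0). lra.
Qed.

Definition rr n := Qprod n * (x - Psum n).

Lemma rr_bounds n : 0 <= rr n <= 1.
Proof.
  unfold rr. pose proof (x_bounds n). pose proof (Qprod_pos n). split.
  apply Rmult_le_pos; lra.
  replace 1 with (Qprod n * / Qprod n) by (field; lra).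
  apply Rmult_le_compat_l; lra.
Qed.

Lemma rr_rec n : rr n * INR (qseq (S n)) = INR (Eseq (S n)) + rr (S n).
Proof.
  unfold rr. simpl Psum. simpl Qprod. unfold xterm. simpl Qprod.
  pose proof (Qprod_pos n). pose proof (q_ge n).
  assert (0 < INR (qseq (S n))) by (apply lt_0_INR; lia).
  field. lra.
Qed.

Lemma rr_pos n m j : Defs.pos n = (m, j) -> INR j <= rr n * INR m /\ rr n * INR m < INR j + 1.
Proof.
  intros E. pose proof (rr_rec n) as R. rewrite qseq_S, Eseq_S, E in R. cbn [fst snd] in R.
  rewrite !mult_INR in R. replace (INR 2) with 2 in R by reflexivity. pose proof (rr_bounds (S n)). lra.
Qed.

Lemma rr_lt1 n : rr n < 1.
Proof.
  destruct (Defs.pos n) as [m j] eqn:E. destruct (pos_inv n m j E) as (H1 & H2 & _).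
  destruct (rr_pos n m j E). assert (INR j + 1 <= INR m).
  { rewrite <- S_INR. apply le_INR. lia. }
  assert (0 < INR m) by (apply lt_0_INR; lia).
  destruct (Rlt_dec (rr n) 1) as [|Hn]; auto. exfalso.
  assert (INR m <= rr n * INR m). { rewrite <- (Rmult_1_l (INR m)) at 1. apply Rmult_le_compat_r; lra. }
  lra.
Qed.

Fixpoint Kn (n : nat) : nat := match n with O => O | S k => (qseq (S k) * Kn k + snd (Defs.pos k))%nat end.

Lemma QP n : Qprod n * Psum n = 2 * INR (Kn n).
Proof.
  induction n. simpl. lra.
  simpl Qprod. simpl Psum. simpl Kn. unfold xterm. simpl Qprod.
  pose proof (Qprod_pos n). pose proof (q_ge n).
  assert (0 < INR (qseq (S n))) by (apply lt_0_INR; lia).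
  transitivity (INR (qseq (S n)) * (Qprod n * Psum n) + INR (Eseq (S n))).
  field. lra.
  rewrite IHn, Eseq_S, plus_INR, !mult_INR. simpl (INR 2). ring.
Qed.

Lemma TQ_x n : TQ n x = rr n.
Proof.
  unfold TQ. replace (Qprod n * x) with (INR (2 * Kn n) + rr n).
  apply frac_nat. split. apply rr_bounds. apply rr_lt1.
  unfold rr. rewrite mult_INR, <- QP. simpl. ring.
Qed.

Lemma TQ_x2 n : TQ n (x / 2) = rr n / 2.
Proof.
  unfold TQ. replace (Qprod n * (x / 2)) with (INR (Kn n) + rr n / 2).
  apply frac_nat. pose proof (rr_bounds n). pose proof (rr_lt1 n). lra.
  unfold rr. pose proof (QP n). field_simplify. lra.
Qed.
End X.

Section Cnt.
Variable r : nat -> R.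
Hypothesis Hr : forall n m j, Defs.pos n = (m, j) -> INR j <= r n * INR m /\ r n * INR m < INR j + 1.
Hypothesis Hr0 : forall n, 0 <= r n.
Variable b : R.
Hypothesis Hb : 0 <= b <= 1.

Lemma inv N : forall m j, Defs.pos N = (m, j) ->
  b * (INR N - INR j) - (INR m - 1) + Rmin (INR j) (b * INR m - 1) <= INR (count_in r 0 b N) /\
  INR (count_in r 0 b N) <= b * (INR N - INR j) + (INR m - 1) + Rmin (INR j) (b * INR m + 1).
Proof.
  induction N as [|N IH]; intros m j E.
  - simpl in E. inversion E; subst. simpl. unfold Rmin.
    destruct (Rle_dec _ _); destruct (Rle_dec _ _); lra.
  - destruct (Defs.pos N) as [m0 j0] eqn:E0.
    destruct (pos_inv N m0 j0 E0) as (H1 & H2 & H3).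
    destruct (IH m0 j0 eq_refl) as [L U].
    destruct (Hr N m0 j0 E0) as [R1 R2].
    assert (Hm : 1 <= INR m0) by (replace 1 with (INR 1) by reflexivity; apply le_INR; lia).
    assert (bm1 : b * INR m0 <= INR m0) by nra.
    assert (bm0 : 0 <= b * INR m0) by nra.
    simpl count_in. rewrite plus_INR. rewrite S_INR.
    pose proof (Hr0 N) as Hr0N.
    assert (HI : (r N < b /\ INR (if Rle_dec 0 (r N) then if Rlt_dec (r N) b then 1%nat else 0%nat else 0%nat) = 1
                 /\ r N * INR m0 < b * INR m0) \/
                 (b <= r N /\ INR (if Rle_dec 0 (r N) then if Rlt_dec (r N) b then 1%nat else 0%nat else 0%nat) = 0
                 /\ b * INR m0 <= r N * INR m0)).
    { destruct (Rle_dec 0 (r N)); [|lra]. destruct (Rlt_dec (r N) b).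
      - left. split; auto. split. reflexivity. apply Rmult_lt_compat_r; lra.
      - right. split. lra. split. reflexivity. apply Rmult_le_compat_r; lra. }
    simpl Defs.pos in E. rewrite E0 in E.
    destruct (Nat.ltb (S j0) m0) eqn:Lt.
    + apply Nat.ltb_lt in Lt. inversion E; subst m j. clear E.
      rewrite S_INR.
      unfold Rmin in *. destruct HI as [(HI1&HI2&HI3)|(HI1&HI2&HI3)]; rewrite HI2;
      repeat destruct (Rle_dec _ _); split; lra.
    + apply Nat.ltb_ge in Lt. inversion E; subst m j. clear E.
      assert (Hj : INR m0 = INR j0 + 1) by (rewrite <- S_INR; f_equal; lia).
      assert (Hbj : b * INR m0 = b * INR j0 + b) by (rewrite Hj; ring).
      rewrite S_INR. simpl (INR 0).
      assert (b * (INR m0 + 1) = b * INR m0 + b) by ring.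
      unfold Rmin in *. destruct HI as [(HI1&HI2&HI3)|(HI1&HI2&HI3)]; rewrite HI2;
      repeat destruct (Rle_dec _ _); split; lra.
Qed.

Lemma bound_C N : Rabs (INR (count_in r 0 b N) - b * INR N) <= 2 * INR (fst (Defs.pos N)).
Proof.
  destruct (Defs.pos N) as [m j] eqn:E. simpl fst.
  destruct (inv N m j E) as [L U]. destruct (pos_inv N m j E) as (H1 & H2 & H3).
  assert (INR j <= INR m) by (apply le_INR; lia).
  assert (0 <= INR j) by apply pos_INR.
  assert (b * INR j <= INR j) by nra. assert (0 <= b * INR j) by nra.
  assert (b * INR j <= b * INR m) by nra.
  unfold Rmin in *. apply Rabs_le. repeat destruct (Rle_dec _ _); split; lra.
Qed.

Lemma m_small eps : eps > 0 -> exists N0, forall N, (N >= N0)%nat ->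
  2 * INR (fst (Defs.pos N)) < eps * INR N.
Proof.
  intros He. destruct (INR_unbounded (4 / eps)) as [K HK].
  destruct (INR_unbounded (2 * INR K / eps)) as [N0 HN0].
  exists N0. intros N HN.
  destruct (Defs.pos N) as [m j] eqn:E. simpl fst.
  destruct (pos_inv N m j E) as (H1 & H2 & H3).
  assert (HN' : INR N0 <= INR N) by (apply le_INR; lia).
  assert (eps * (4 / eps) = 4) by (field; lra).
  assert (eps * (2 * INR K / eps) = 2 * INR K) by (field; lra).
  destruct (Nat.le_gt_cases m K) as [Hm|Hm].
  - apply le_INR in Hm. nra.
  - assert (HK1 : INR K <= INR m - 1).
    { replace 1 with (INR 1) by reflexivity. rewrite <- minus_INR by lia. apply le_INR; lia. }
    assert (HT : (INR m - 1) * INR m <= 2 * INR N).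
    { replace 1 with (INR 1) by reflexivity. rewrite <- minus_INR by lia.
      rewrite <- mult_INR. replace 2 with (INR 2) by reflexivity. rewrite <- mult_INR.
      apply le_INR. lia. }
    assert (0 < INR m) by (apply lt_0_INR; lia).
    assert (4 < eps * (INR m - 1)) by nra.
    nra.
Qed.

Lemma cv_0b : Un_cv (fun N => INR (count_in r 0 b N) / INR N) b.
Proof.
  intros eps He. destruct (m_small eps He) as [N0 HN0].
  exists (S N0). intros N HN. unfold R_dist.
  assert (HNp : 0 < INR N) by (apply lt_0_INR; lia).
  pose proof (bound_C N). specialize (HN0 N ltac:(lia)).
  replace (INR (count_in r 0 b N) / INR N - b) with ((INR (count_in r 0 b N) - b * INR N) / INR N) by (field; lra).
  unfold Rdiv. rewrite Rabs_mult, Rabs_inv, (Rabs_right (INR N)) by lra.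
  apply (Rmult_lt_reg_r (INR N)); auto. rewrite Rmult_assoc, Rinv_l by lra. lra.
Qed.
End Cnt.

Lemma split_cnt (s : nat -> R) a b N : 0 <= a <= b -> (forall n, 0 <= s n) ->
  count_in s 0 b N = (count_in s 0 a N + count_in s a b N)%nat.
Proof.
  intros Hab Hs. induction N. reflexivity.
  simpl. rewrite IHN. pose proof (Hs N).
  destruct (Rle_dec 0 (s N)); [|lra].
  destruct (Rlt_dec (s N) b); destruct (Rlt_dec (s N) a); destruct (Rle_dec a (s N)); try lra; lia.
Qed.

Theorem mainTheorem4 :
  (exists x : R, infinite_sum xterm x) /\
  (forall x : R, infinite_sum xterm x ->
     Q_distribution_normal x /\ ~ Q_distribution_normal (x / 2)).
Proof.
  split.
  - assert (Hg : Un_growing (sum_f_R0 xterm)).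
    { intros k. simpl. pose proof (xterm_nonneg (S k)). lra. }
    assert (Hu : has_ub (sum_f_R0 xterm)).
    { exists 1. intros y [i ->]. rewrite sum_Psum. pose proof (tele 0 (S i)).
      simpl Psum in H at 2. simpl (0 + S i)%nat in H. simpl Qprod in H at 1.
      pose proof (Qprod_pos (S i)). pose proof (Rinv_0_lt_compat _ H0). lra. }
    destruct (growing_cv _ Hg Hu) as [l Hl]. exists l. exact Hl.
  - intros x Hx. split.
    + intros a b Ha Hab Hb.
      assert (Ef : (fun n => frac_part (TQ n x)) = rr x).
      { apply functional_extensionality. intros n. rewrite TQ_x by auto.
        apply frac_id. split. apply (rr_bounds x Hx). apply (rr_lt1 x Hx). }
      rewrite Ef.
      assert (Hr : forall n m j, Defs.pos n = (m, j) -> INR j <= rr x n * INR m /\ rr x n * INR m < INR j + 1)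
        by (intros; apply rr_pos; auto).
      assert (Hr0 : forall n, 0 <= rr x n) by (intros; apply (rr_bounds x Hx)).
      pose proof (CV_minus _ _ _ _ (cv_0b _ Hr Hr0 b ltac:(lra)) (cv_0b _ Hr Hr0 a ltac:(lra))) as H.
      intros eps He. destruct (H eps He) as [N HN]. exists N. intros n Hn.
      specialize (HN n Hn). simpl in HN.
      rewrite (split_cnt (rr x) a b n) in HN by (auto; lra).
      rewrite plus_INR in HN. unfold R_dist in *.
      replace (INR (count_in (rr x) a b n) / INR n - (b - a)) with
        ((INR (count_in (rr x) 0 a n) + INR (count_in (rr x) a b n)) / INR n -
         INR (count_in (rr x) 0 a n) / INR n - (b - a)) by (unfold Rdiv; ring).
      exact HN.
    + intros Hn. specialize (Hn (1/2) 1 ltac:(lra) ltac:(lra) ltac:(lra)).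
      assert (E0 : forall N, count_in (fun n => frac_part (TQ n (x / 2))) (1/2) 1 N = 0%nat).
      { induction N. reflexivity. simpl. rewrite IHN.
        rewrite TQ_x2 by auto. pose proof (rr_bounds x Hx N). pose proof (rr_lt1 x Hx N).
        rewrite frac_id by lra.
        destruct (Rle_dec (1/2) (rr x N / 2)). lra. reflexivity. }
      assert (Hz : Un_cv (fun N => INR (count_in (fun n => frac_part (TQ n (x / 2))) (1/2) 1 N) / INR N) 0).
      { intros eps He. exists 0%nat. intros n _. rewrite E0. unfold R_dist. simpl.
        unfold Rdiv. rewrite Rmult_0_l, Rminus_0_r, Rabs_R0. lra. }
      pose proof (UL_sequence _ _ _ Hn Hz). lra.
Qed.
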